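(* Let $F$ be a field of characteristic $0$, $V$ an $n$-dimensional $F$-vector space, $G\le\mathrm{GL}(V)$ a finite group generated by pseudo-reflections with degrees $d_1,\dots,d_n$, $M$ an $r$-dimensional $F[G]$-module, and $\chi$ a one-dimensional character of $G$. Suppose $J_{M^*}$ divides $\Delta_\chi$. Then \[ \mathrm{Hilb}\big((\mathrm{S}(V^* )\otimes\wedge M^* )^\chi;q,z\big)=q^{\deg\Delta_\chi}\,\frac{\prod_{i=1}^r(1+zq^{-e_i^{M^*}})}{\prod_{i=1}^n(1-q^{d_i})}. \]
   Context: A pseudo-reflection is $g\in\mathrm{GL}(V)$ with $\dim\ker(g-I)=n-1$. $G$ acts contragrediently on $V^*,M^*$ and hence diagonally on $\mathrm{S}(V^* )\otimes\wedge M^*$ (symmetric algebra tensor exterior algebra), bigraded by (polynomial degree, exterior degree). $W^\chi=\{w: gw=\chi(g)w\ \forall g\}$. $\mathrm{S}(V^* )^G$ is a polynomial algebra on algebraically independent homogeneous invariants of degrees $d_1,\dots,d_n$ (the degrees of $G$). $\Delta_\chi$ is a homogeneous generator of the rank-one free $\mathrm{S}(V^* )^G$-module $\mathrm{S}(V^* )^\chi$. With $N=M^*$: $(\mathrm{S}(V^* )\otimes M)^G$ is a free $\mathrm{S}(V^* )^G$-module with a homogeneous basis $\omega_1^{M^*},\dots,\omega_r^{M^*}$ of bidegrees $(e_i^{M^*},1)$; the $e_i^{M^*}$ are the $M^*$-exponents. Writing $\omega_i^{M^*}=\sum_j J_{ij}\otimes m_j$ for a basis $m_j$ of $M$, $J_{M^*}=\det(J_{ij})$.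 For a bigraded space $W=\bigoplus W_{i,j}$, $\mathrm{Hilb}(W;q,z)=\sum_{i,j}q^iz^j\dim W_{i,j}$. *)

(* Defs.v *)
From HB Require Import structures.
From mathcomp Require Import all_boot all_order all_algebra all_fingroup.
From mathcomp Require Import mxrepresentation.
From mathcomp Require Import mpoly.

Set Implicit Arguments.
Unset Strict Implicit.
Unset Printing Implicit Defensive.

Import GRing.Theory.
Local Open Scope ring_scope.

Section Defs.
Variables (F : fieldType) (n : nat) (gT : finGroupType).

(* V = F^n (column vectors), rho g is the matrix of g acting on the left.
   S(V_dual) = {mpoly F[n]}, 'X_i = i-th coordinate function.
   Contragredient action: (g . p)(x) = p (rho(g^-1) x). *)
Definition sact (rho : gT -> 'M[F]_n) (g : gT) (p : {mpoly F[n]}) : {mpoly F[n]} :=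
  p \mPo [tuple \sum_(k < n) rho (g^-1)%g i k *: 'X_k | i < n].

Definition pseudo_reflection (A : 'M[F]_n) : bool :=
  \rank (kermx (A - 1%:M)) == (n - 1)%N.

Definition generated_by_pseudo_reflections (G : {group gT}) (rho : gT -> 'M[F]_n) :=
  (G : {set gT}) = <<[set g in G | pseudo_reflection (rho g)]>>%g.

Definition linear_char (G : {group gT}) (chi : gT -> F) :=
  chi 1%g = 1 /\ {in G &, forall x y, chi (x * y)%g = chi x * chi y}.

Definition invariant (G : {group gT}) rho (p : {mpoly F[n]}) :=
  forall g, g \in G -> sact rho g p = p.
Definition semi_invariant (G : {group gT}) rho (chi : gT -> F) (p : {mpoly F[n]}) :=
  forall g, g \in G -> sact rho g p = chi g *: p.

Definition basic_invariants (G : {group gT}) rho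
    (f : 'I_n -> {mpoly F[n]}) (d : 'I_n -> nat) :=
  [/\ forall i, f i \is (d i).-homog,
      forall i, invariant G rho (f i),
      forall P : {mpoly F[n]}, P \mPo [tuple f i | i < n] = 0 -> P = 0 &
      forall p, invariant G rho p -> exists P : {mpoly F[n]}, p = P \mPo [tuple f i | i < n]].

Definition semi_inv_generator (G : {group gT}) rho chi (Delta : {mpoly F[n]}) (delta : nat) :=
  [/\ Delta \is delta.-homog, Delta != 0,
      semi_invariant G rho chi Delta &
      forall p, semi_invariant G rho chi p ->
        exists c, invariant G rho c /\ p = c * Delta].

Section Module.
Variable r : nat.

(* S(V_dual) (x) M with M = F^r, basis m_j = e_j: elements sum_j w_j (x) m_j,
   encoded as w : {ffun 'I_r -> {mpoly F[n]}}; sigma g acts on the left on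
   column vectors, so g.(p (x) e_j) = (g.p) (x) sum_k sigma(g)_{kj} e_k. *)
Definition smact (rho : gT -> 'M[F]_n) (sigma : gT -> 'M[F]_r) (g : gT)
    (w : {ffun 'I_r -> {mpoly F[n]}}) : {ffun 'I_r -> {mpoly F[n]}} :=
  [ffun k => \sum_(j < r) sigma g k j *: sact rho g (w j)].

Definition sm_invariant (G : {group gT}) rho sigma w :=
  forall g, g \in G -> smact rho sigma g w = w.

Definition sm_comb (c : 'I_r -> {mpoly F[n]}) (om : 'I_r -> {ffun 'I_r -> {mpoly F[n]}}) :
    {ffun 'I_r -> {mpoly F[n]}} :=
  \sum_(i < r) [ffun k => c i * om i k].

(* omega_1..omega_r : homogeneous basis of the free S(V_dual)^G-module
   (S(V_dual) (x) M)^G, omega_i of bidegree (e_i, 1). *)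
Definition exponent_basis (G : {group gT}) rho sigma
    (om : 'I_r -> {ffun 'I_r -> {mpoly F[n]}}) (e : 'I_r -> nat) :=
  [/\ forall i k, om i k \is (e i).-homog,
      forall i, sm_invariant G rho sigma (om i),
      forall w, sm_invariant G rho sigma w ->
        exists c, (forall i, invariant G rho (c i)) /\ w = sm_comb c om &
      forall c, (forall i, invariant G rho (c i)) -> sm_comb c om = 0 ->
        forall i, c i = 0].

Definition jac (om : 'I_r -> {ffun 'I_r -> {mpoly F[n]}}) : {mpoly F[n]} :=
  \det (\matrix_(i < r, j < r) om i j).

(* Entry of A at natural indices (0 outside range). *)
Definition natent (A : 'M[F]_r) (i k : nat) : F :=
  match @insub _ (fun x => x < r)%N 'I_r i, @insub _ (fun x => x < r)%N 'I_r k with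
  | Some i', Some k' => A i' k'
  | _, _ => 0
  end.

Definition minor (A : 'M[F]_r) (T S : {set 'I_r}) : F :=
  \det (\matrix_(a < #|T|, b < #|T|)
          natent A (nth 0%N [seq val x | x <- enum T] a)
                   (nth 0%N [seq val x | x <- enum S] b)).

(* S(V_dual) (x) /\ M_dual : elements sum_S w_S (x) x_S, x_S = x_{s_1}/\.../\x_{s_j}
   (s_1 < ... < s_j), x_k the dual basis of M_dual. Contragredient action on M_dual:
   g . x_k = sum_m sigma(g^-1)_{km} x_m, hence on /\^j M_dual:
   g . x_T = sum_{|S|=|T|} minor(sigma(g^-1); T, S) x_S. *)
Definition wact (rho : gT -> 'M[F]_n) (sigma : gT -> 'M[F]_r) (g : gT)
    (w : {ffun {set 'I_r} -> {mpoly F[n]}}) : {ffun {set 'I_r} -> {mpoly F[n]}} :=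
  [ffun S : {set 'I_r} => \sum_(T : {set 'I_r} | #|T| == #|S|)
                minor (sigma (g^-1)%g) T S *: sact rho g (w T)].

Definition chi_piece (G : {group gT}) rho sigma (chi : gT -> F) (deg j : nat)
    (w : {ffun {set 'I_r} -> {mpoly F[n]}}) : Prop :=
  [/\ forall S : {set 'I_r}, #|S| != j -> w S = 0,
      forall S, w S \is deg.-homog &
      forall g, g \in G -> wact rho sigma g w = chi g *: w].

End Module.
End Defs.

Section Dim.
Variables (F : fieldType) (W : lmodType F).

Definition lin_indep k (v : 'I_k -> W) :=
  forall c : 'I_k -> F, \sum_(i < k) c i *: v i = 0 -> forall i, c i = 0.

Definition has_dim (P : W -> Prop) (k : nat) :=
  (exists v : 'I_k -> W, (forall i, P (v i)) /\ lin_indep v) /\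
  (forall v : 'I_k.+1 -> W, (forall i, P (v i)) -> ~ lin_indep v).
End Dim.

(* Coefficients of q^delta * prod_i (1 + z q^{-e_i}) / prod_i (1 - q^{d_i})
   in F((q))[z]: the coefficient of q^m in 1/prod(1-q^{d_i}) is the number of
   (k_i) in N^n with sum k_i d_i = m (0 for m < 0). *)
Definition nsol (n : nat) (d : 'I_n -> nat) (m : int) : nat :=
  match m with
  | Posz m => #|[set k : {ffun 'I_n -> 'I_m.+1} | (\sum_(i < n) k i * d i == m)%N]|
  | Negz _ => 0%N
  end.

Definition rhs_coef (n r : nat) (d : 'I_n -> nat) (e : 'I_r -> nat) (delta : nat)
    (a : int) (j : nat) : nat :=
  (\sum_(S : {set 'I_r} | #|S| == j) nsol d (a - delta%:Z + (\sum_(i in S) e i)%N%:Z))%N.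

(* Main.v *)
Require Import Defs.
From HB Require Import structures.
From mathcomp Require Import all_boot all_order all_algebra all_fingroup.
From mathcomp Require Import mxrepresentation.
From mathcomp Require Import mpoly.
From mathcomp Require Import ssrcomplements.
From mathcomp Require Import zify.

Set Implicit Arguments.
Unset Strict Implicit.
Unset Printing Implicit Defensive.

Import GRing.Theory.
Local Open Scope ring_scope.
Section Minors.
Variable R : comRingType.

Definition natentR r (A : 'M[R]_r) (i k : nat) : R :=
  match @insub _ (fun x => x < r)%N 'I_r i, @insub _ (fun x => x < r)%N 'I_r k with
  | Some i', Some k' => A i' k'
  | _, _ => 0
  end.

Definition eTn r (T : {set 'I_r}) (a : nat) : nat := nth 0%N [seq val x | x <- enum T] a.

Definition mj j r (A : 'M[R]_r) (T S : {set 'I_r}) : R :=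
  \det (\matrix_(a < j, b < j) natentR A (eTn T a) (eTn S b)).

Definition repl m j (N : 'M[R]_m) (s : 'I_j -> nat) (W : 'M[R]_(j, m)) : 'M[R]_m :=
  \matrix_(i, k) if [pick a | s a == i] is Some a then W a k else N i k.

Lemma natentR_ord r (A : 'M[R]_r) (i k : 'I_r) : natentR A i k = A i k.
Proof. by rewrite /natentR !valK. Qed.

Lemma natentR_outl r (A : 'M[R]_r) i k : (r <= i)%N -> natentR A i k = 0.
Proof. by move=> h; rewrite /natentR insubF //= ltnNge h. Qed.

Lemma natentR_outr r (A : 'M[R]_r) i k : (r <= k)%N -> natentR A i k = 0.
Proof. by move=> h; rewrite /natentR [insub k]insubF /= ?ltnNge ?h //; case: insub. Qed.

Section Repl.
Variables (m j : nat) (N : 'M[R]_m) (s : 'I_j -> nat).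
Hypothesis sinj : forall a b, s a = s b -> a = b.

Lemma repl_in (W : 'M[R]_(j, m)) z (i : 'I_m) k : s z = i -> repl N s W i k = W z k.
Proof.
move=> hz; rewrite mxE; case: pickP => [a /eqP ha|/(_ z)]; last by rewrite hz eqxx.
by rewrite (sinj (etrans ha (esym hz))).
Qed.

Lemma repl_out (W : 'M[R]_(j, m)) (i : 'I_m) k : (forall a, s a != i) -> repl N s W i k = N i k.
Proof. by move=> h; rewrite mxE; case: pickP => [a ha|//]; have := h a; rewrite ha. Qed.

Hypothesis slt : forall a, (s a < m)%N.
Let so a : 'I_m := Ordinal (slt a).

Lemma so_inj : injective so.
Proof. by move=> a b /(congr1 val) /= /sinj. Qed.

Lemma repl_xrow (W : 'M[R]_(j, m)) x y :
  repl N s (xrow x y W) = xrow (so x) (so y) (repl N s W).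
Proof.
apply/matrixP => i k; rewrite [in RHS]/xrow /row_perm [in RHS]mxE.
case: (pickP (fun a => s a == i)) => [z /eqP hz | hn].
  have -> : i = so z by apply/val_inj.
  rewrite (repl_in _ (z := z)) // /xrow /row_perm mxE.
  case: tpermP => [->|->|/eqP ne1 /eqP ne2].
  - by rewrite tpermL (repl_in _ (z := y)).
  - by rewrite tpermR (repl_in _ (z := x)).
  - rewrite tpermD ?(repl_in _ (z := z)) //.
    by apply: contra ne1 => /eqP/so_inj ->.
    by apply: contra ne2 => /eqP/so_inj ->.
have nim : forall a, s a != i by move=> a; rewrite hn.
rewrite tpermD; first by rewrite !repl_out.
  by apply/eqP => /(congr1 val) /= h; move: (nim x); rewrite h eqxx.
by apply/eqP => /(congr1 val) /= h; move: (nim y); rewrite h eqxx.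
Qed.

Lemma det_repl_xrow (W : 'M[R]_(j, m)) x y : x != y ->
  \det (repl N s (xrow x y W)) = - \det (repl N s W).
Proof.
move=> nxy; rewrite repl_xrow xrowE det_mulmx det_perm odd_tperm.
have -> : (so x != so y) by apply: contra nxy => /eqP/so_inj ->.
by rewrite expr1 mulN1r.
Qed.

Lemma det_repl_perm (t : 'S_j) (W : 'M[R]_(j, m)) :
  \det (repl N s (row_perm t W)) = (-1) ^+ t * \det (repl N s W).
Proof.
case: (prod_tpermP t) => ts -> dts.
elim: ts dts W => [|u ts IH] /= dts W.
  by rewrite big_nil row_perm1 odd_perm1 expr0 mul1r.
case/andP: dts => du dts.
rewrite big_cons row_permM -/(xrow u.1 u.2 _) det_repl_xrow // IH //.
by rewrite odd_permM signr_addb odd_tperm du expr1 mulN1r mulNr.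
Qed.

Lemma prod_repl (W : 'M[R]_(j, m)) (t : 'S_m) :
  \prod_i repl N s W i (t i) =
  (\prod_(i | i \notin codom so) N i (t i)) * \prod_a W a (t (so a)).
Proof.
rewrite (bigID (fun i => i \in codom so)) /= mulrC; congr (_ * _).
  apply: eq_bigr => i hi; rewrite repl_out // => a; apply/eqP => ha.
  by move/negP: hi; apply; apply/codomP; exists a; apply/val_inj.
rewrite (eq_bigl (mem (so @: setT))); last first.
  by move=> i /=; apply/codomP/imsetP => [[a ->]|[a _ ->]]; exists a.
rewrite big_imset /=; last by move=> a b _ _ /so_inj.
by apply: eq_big => [a|a _]; [rewrite inE | rewrite (repl_in _ (z := a))].
Qed.

Lemma det_repl_expand p (X : 'M[R]_(j, p)) (V : 'M[R]_(p, m)) :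
  \det (repl N s (X *m V)) = \sum_(f : {ffun 'I_j -> 'I_p})
     (\prod_a X a (f a)) * \det (repl N s (\matrix_(a, k) V (f a) k)).
Proof.
rewrite /determinant.
under eq_bigr => t _ do rewrite prod_repl.
under [RHS]eq_bigr => f _ do rewrite big_distrr /=.
rewrite exchange_big /=; apply: eq_bigr => t _.
under [RHS]eq_bigr => f _ do rewrite prod_repl.
under [RHS]eq_bigr => f _ do rewrite mulrCA.
rewrite -big_distrr /=; congr (_ * _).
under [RHS]eq_bigr => f _ do rewrite mulrCA.
rewrite -big_distrr /=; congr (_ * _).
under eq_bigr => a _ do rewrite mxE.
rewrite bigA_distr_bigA /=; apply: eq_bigr => f _.
rewrite -big_split /=; apply: eq_bigr => a _; by rewrite mxE.
Qed.

End Repl.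
End Minors.
Section Minors2.
Variable R : comRingType.

Definition natcol j p (X : 'M[R]_(j, p)) (a : 'I_j) (k : nat) : R :=
  if @insub _ (fun x => x < p)%N 'I_p k is Some k' then X a k' else 0.
Definition natrow p m (V : 'M[R]_(p, m)) (k : nat) (c : 'I_m) : R :=
  if @insub _ (fun x => x < p)%N 'I_p k is Some k' then V k' c else 0.

Lemma sum_inj_ffun j p (x0 : 'I_j -> 'I_p) (F : {ffun 'I_j -> 'I_p} -> R) :
  \sum_(f : {ffun 'I_j -> 'I_p} | injectiveb f) F f =
  \sum_(U : {set 'I_p} | #|U| == j) \sum_(t : 'S_j) F [ffun a => nth (x0 a) (enum U) (t a)].
Proof.
rewrite (partition_big (fun f : {ffun 'I_j -> 'I_p} => f @: setT) (fun U => #|U| == j)) /=; last first.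
  by move=> f /injectiveP finj; rewrite card_imset // cardsT card_ord.
apply: eq_bigr => U /eqP cU.
pose h (t : 'S_j) := [ffun a => nth (x0 a) (enum U) (t a)] : {ffun 'I_j -> 'I_p}.
have szU : size (enum U) = j by rewrite -cardE cU.
have hfinj : forall t, injective (h t).
  move=> t a b; rewrite !ffunE (set_nth_default (x0 a) (x0 b)) ?szU ?ltn_ord //.
  move/eqP; rewrite nth_uniq ?szU ?ltn_ord ?enum_uniq // => /eqP /val_inj.
  exact: perm_inj.
have hinj : injective h.
  move=> t1 t2 /ffunP eq; apply/permP => a; have := eq a; rewrite !ffunE => /eqP.
  by rewrite nth_uniq ?szU ?ltn_ord ?enum_uniq // => /eqP /val_inj.
transitivity (\sum_(t in [set: 'S_j]) F (h t)); last by apply: eq_bigl => t; rewrite in_setT.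
rewrite -(big_imset F (h := h)) /=; last by move=> ? ? _ _; apply: hinj.
apply: eq_bigl => f; apply/idP/idP.
  case/andP => /injectiveP finj /eqP fU.
  have fa_in a : f a \in enum U by rewrite mem_enum -fU imset_f ?inE.
  have gP a : (index (f a) (enum U) < j)%N by move: (fa_in a); rewrite -index_mem szU.
  pose g a := Ordinal (gP a).
  have ginj : injective g.
    move=> a b /(congr1 val) /= e; apply: finj.
    by rewrite -(nth_index (x0 a) (fa_in a)) e nth_index.
  apply/imsetP; exists (perm ginj); first by rewrite inE.
  by apply/ffunP => a; rewrite ffunE permE /= nth_index.
case/imsetP => t _ ->; apply/andP; split; first by apply/injectiveP; apply: hfinj.
rewrite eqEcard card_imset ?cardsT ?card_ord ?cU ?leqnn ?andbT //.
apply/subsetP => y /imsetP [a _ ->]; rewrite ffunE -mem_enum mem_nth ?szU //.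
Qed.

Section Repl2.
Variables (m j : nat) (N : 'M[R]_m) (s : 'I_j -> nat).
Hypothesis sinj : forall a b, s a = s b -> a = b.
Hypothesis slt : forall a, (s a < m)%N.
Let so a : 'I_m := Ordinal (slt a).

Lemma det_repl_CB p (X : 'M[R]_(j, p)) (V : 'M[R]_(p, m)) :
  \det (repl N s (X *m V)) = \sum_(U : {set 'I_p} | #|U| == j)
     \det (\matrix_(a, b) natcol X a (eTn U b)) *
     \det (repl N s (\matrix_(a, k) natrow V (eTn U a) k)).
Proof.
rewrite (det_repl_expand _ sinj slt) (bigID (fun f : {ffun _} => injectiveb f)) /=.
rewrite [X in _ + X]big1 ?addr0; last first.
  move=> f /injectivePn [a [b nab fab]].
  rewrite (@determinant_alternate _ _ _ (so a) (so b)) ?mulr0 //.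
    by apply: contra nab => /eqP /(congr1 val) /= /sinj ->.
  by move=> k; rewrite (@repl_in _ _ _ N s sinj _ a) // (@repl_in _ _ _ N s sinj _ b) // !mxE fab.
case: (leqP j p) => hjp; last first.
  rewrite big_pred0; last first.
    by move=> f; apply/negbTE/negP => /injectiveP /leq_card; rewrite !card_ord leqNgt hjp.
  rewrite big_pred0 // => U; apply/negbTE/eqP => h.
  by move: (max_card (mem U)); rewrite h card_ord leqNgt hjp.
pose x0 a : 'I_p := widen_ord hjp a.
rewrite (sum_inj_ffun x0); apply: eq_bigr => U /eqP cU.
have szU : size (enum U) = j by rewrite -cardE cU.
have Hm : forall t : 'S_j, \matrix_(a, k) V ([ffun a => nth (x0 a) (enum U) (t a)] a) k =
   row_perm t (\matrix_(a, k) natrow V (eTn U a) k).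
  move=> t; apply/matrixP => a k; rewrite !mxE ffunE /natrow /eTn.
  by rewrite (nth_map (x0 a)) ?szU // valK.
under eq_bigr => t _ do rewrite Hm (det_repl_perm _ sinj slt).
rewrite [\det (\matrix_(a, b) _)]/determinant big_distrl /=; apply: eq_bigr => t _.
rewrite mulrA [_ * (-1) ^+ t]mulrC; congr (_ * _ * _).
apply: eq_bigr => a _; rewrite !mxE ffunE /natcol /eTn.
by rewrite (nth_map (x0 a)) ?szU // valK.
Qed.

End Repl2.
End Minors2.
Section SetLemmas.
Variable r : nat.
Implicit Types T S U : {set 'I_r}.

Lemma size_eTn T : size [seq val x | x <- enum T] = #|T|.
Proof. by rewrite size_map -cardE. Qed.

Lemma eTnP T a : (a < #|T|)%N -> exists2 t : 'I_r, t \in T & eTn T a = t.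
Proof.
move=> ha; have : eTn T a \in [seq val x | x <- enum T] by rewrite mem_nth ?size_eTn.
by case/mapP => t; rewrite mem_enum => tT ->; exists t.
Qed.

Lemma eTn_lt T a : (a < #|T|)%N -> (eTn T a < r)%N.
Proof. by case/eTnP => t _ ->. Qed.

Lemma eTn_inj T a b : (a < #|T|)%N -> (b < #|T|)%N -> eTn T a = eTn T b -> a = b.
Proof.
move=> ha hb /eqP; rewrite /eTn nth_uniq ?size_eTn //; first by move/eqP.
by rewrite map_inj_uniq ?enum_uniq //; apply: val_inj.
Qed.

Lemma eTn_index T (t : 'I_r) : t \in T ->
  (index t (enum T) < #|T|)%N /\ eTn T (index t (enum T)) = t.
Proof.
move=> tT; rewrite cardE index_mem mem_enum tT; split=> //.
by rewrite /eTn -(index_map val_inj) nth_index // map_f // mem_enum.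
Qed.

Lemma eTn_notin T S a : (a < #|S|)%N -> forall t : 'I_r, t \notin S -> eTn S a != t.
Proof. by case/eTnP=> u uS -> t tS; apply: contra tS => /eqP/val_inj <-. Qed.

Lemma sub_card_neq T S : #|T| = #|S| -> T != S -> exists2 t, t \in T & t \notin S.
Proof.
move=> c nTS; have : ~~ (T \subset S).
  by apply: contra nTS => sTS; rewrite eqEcard sTS c leqnn.
by case/subsetPn => t tT tS; exists t.
Qed.

End SetLemmas.

Section Minors3.
Variable R : comRingType.

Lemma det_row0 n (M : 'M[R]_n) a : (forall b, M a b = 0) -> \det M = 0.
Proof. by move=> h; rewrite (expand_det_row _ a) big1 // => b _; rewrite h mul0r. Qed.

Lemma repl_id j (N : 'M[R]_j) (W : 'M[R]_j) : repl N (fun a : 'I_j => nat_of_ord a) W = W.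
Proof. by apply/matrixP => i k; rewrite (repl_in _ _ _ (z := i)) //; apply: val_inj. Qed.

Lemma natentR_mul r (A B : 'M[R]_r) i l :
  natentR (A *m B) i l = \sum_(k < r) natentR A i k * natentR B k l.
Proof.
rewrite /natentR; case: insubP => [i' _ _|_]; last by rewrite big1 // => k _; rewrite mul0r.
case: insubP => [l' _ _|_]; last first.
  by rewrite big1 // => k _; rewrite valK /= mulr0.
by rewrite mxE; apply: eq_bigr => k _; rewrite valK.
Qed.

Lemma natcol_natentR j r (A : 'M[R]_r) (g : 'I_j -> nat) a k :
  natcol (\matrix_(a < j, k < r) natentR A (g a) k) a k = natentR A (g a) k.
Proof.
rewrite /natcol; case: insubP => [k' _ <-|kn]; first by rewrite mxE.
by rewrite natentR_outr // leqNgt.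
Qed.

Lemma natrow_natentR j r (A : 'M[R]_r) (g : 'I_j -> nat) (a : nat) (k : 'I_j) :
  natrow (\matrix_(k < r, b < j) natentR A k (g b)) a k = natentR A a (g k).
Proof.
rewrite /natrow; case: insubP => [a' _ <-|an]; first by rewrite mxE.
by rewrite natentR_outl // leqNgt.
Qed.

Lemma mj_mul j r (A B : 'M[R]_r) (T S : {set 'I_r}) :
  mj j (A *m B) T S = \sum_(U : {set 'I_r} | #|U| == j) mj j A T U * mj j B U S.
Proof.
pose X := \matrix_(a < j, k < r) natentR A (eTn T a) k.
pose V := \matrix_(k < r, b < j) natentR B k (eTn S b).
have -> : mj j (A *m B) T S = \det (repl 0 (fun a : 'I_j => nat_of_ord a) (X *m V)).
  rewrite repl_id /mj; congr (\det _); apply/matrixP => a b.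
  by rewrite !mxE natentR_mul; apply: eq_bigr => k _; rewrite !mxE.
rewrite det_repl_CB //; last by move=> a b; apply: val_inj.
apply: eq_bigr => U _; rewrite repl_id /mj; congr (_ * _); congr (\det _).
  by apply/matrixP => a b; rewrite !mxE natcol_natentR.
by apply/matrixP => a b; rewrite !mxE natrow_natentR.
Qed.

Lemma mj1 j r (T S : {set 'I_r}) : #|T| = j -> #|S| = j -> mj j (1%:M : 'M[R]_r) T S = (T == S)%:R.
Proof.
move=> cT cS; case: (eqVneq T S) => [<-|nTS].
  transitivity (\det (1%:M : 'M[R]_j)); last by rewrite det1.
  rewrite /mj; congr (\det _); apply/matrixP => a b; rewrite !mxE.
  have ha : (a < #|T|)%N by rewrite cT.
  have hb : (b < #|T|)%N by rewrite cT.
  case: (eTnP ha) => u _ eu; case: (eTnP hb) => v _ ev.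
  rewrite eu ev natentR_ord !mxE; suff -> : (u == v) = (a == b) by [].
  apply/eqP/eqP => [uv|ab].
    by apply/val_inj/(eTn_inj ha hb); rewrite eu ev uv.
  by apply: val_inj; rewrite /= -eu -ev ab.
case: (sub_card_neq (etrans cT (esym cS)) nTS) => t tT tS.
case: (eTn_index tT) => ha et.
have ha' : (index t (enum T) < j)%N by rewrite -cT.
rewrite /mj (det_row0 (a := Ordinal ha')) // => b; rewrite mxE /= et.
have hb : (b < #|S|)%N by rewrite cS.
case: (eTnP hb) => u uS ->; rewrite natentR_ord mxE.
by case: eqP => // tu; move: tS; rewrite tu uS.
Qed.

Lemma mj_tr j r (A : 'M[R]_r) (T S : {set 'I_r}) : mj j A^T T S = mj j A S T.
Proof.
rewrite /mj -det_tr; congr (\det _); apply/matrixP => a b; rewrite !mxE /natentR.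
by case: (insub (eTn T b) : option 'I_r) => [?|]; case: (insub (eTn S a) : option 'I_r) => [?|] //; rewrite mxE.
Qed.

Lemma mjZ j r (c : R) (A : 'M[R]_r) (T S : {set 'I_r}) : mj j (c *: A) T S = c ^+ j * mj j A T S.
Proof.
rewrite /mj -detZ; congr (\det _); apply/matrixP => a b; rewrite !mxE /natentR.
by case: (insub (eTn T a) : option 'I_r) => [?|]; case: (insub (eTn S b) : option 'I_r) => [?|] //; rewrite ?mxE ?mulr0.
Qed.

Definition adjm j r (A : 'M[R]_r) (U S : {set 'I_r}) : R :=
  \det (repl A (fun a : 'I_j => eTn S a) (\matrix_(a, k) natrow (1%:M : 'M[R]_r) (eTn U a) k)).

Lemma mj_adjm j r (A : 'M[R]_r) (S' S : {set 'I_r}) : #|S'| = j -> #|S| = j ->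
  \sum_(U : {set 'I_r} | #|U| == j) mj j A S' U * adjm j A U S = (S' == S)%:R * \det A.
Proof.
move=> cS' cS.
have sinj : forall a b : 'I_j, eTn S a = eTn S b -> a = b.
  by move=> a b /eTn_inj; rewrite cS => h; apply/val_inj/h.
have slt : forall a : 'I_j, (eTn S a < r)%N by move=> a; apply: eTn_lt; rewrite cS.
pose Xm := \matrix_(a < j, k < r) natentR A (eTn S' a) k.
transitivity (\det (repl A (fun a : 'I_j => eTn S a) Xm)).
  rewrite -[Xm in repl _ _ Xm]mulmx1 (det_repl_CB A sinj slt Xm 1%:M).
  apply: eq_bigr => U _; rewrite /mj /adjm; congr (_ * _); congr (\det _).
  by apply/matrixP => a b; rewrite !mxE natcol_natentR.
case: (eqVneq S' S) => [<-|nS].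
  rewrite mul1r; congr (\det _); apply/matrixP => i k; rewrite mxE.
  case: pickP => [a /eqP ha|]; last by [].
  by rewrite mxE ha natentR_ord.
rewrite mul0r.
case: (sub_card_neq (etrans cS' (esym cS)) nS) => t tS' tS.
case: (eTn_index tS') => ha et.
have ha' : (index t (enum S') < j)%N by rewrite -cS'.
pose a := Ordinal ha'.
pose i0 : 'I_r := Ordinal (slt a).
have i0S : i0 \in S.
  have hs : (a < #|S|)%N by rewrite cS.
  case: (eTnP hs) => u uS eu.
  by have -> : i0 = u by apply: val_inj; rewrite /= eu.
apply: (@determinant_alternate _ _ _ i0 t).
  by apply: contra tS => /eqP <-.
move=> k; rewrite (@repl_in _ _ _ A _ sinj _ a) // mxE /= et natentR_ord.
rewrite repl_out // => b; apply: eTn_notin => //; by rewrite cS.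
Qed.

End Minors3.

Lemma mj_map (R R' : comRingType) (f : {rmorphism R -> R'}) j r (A : 'M[R]_r) (T S : {set 'I_r}) :
  mj j (map_mx f A) T S = f (mj j A T S).
Proof.
rewrite /mj -det_map_mx; congr (\det _); apply/matrixP => a b; rewrite !mxE /natentR.
by case: (insub (eTn T a) : option 'I_r) => [?|]; case: (insub (eTn S b) : option 'I_r) => [?|] //; rewrite ?mxE ?rmorph0.
Qed.
Section MPolyFacts.
Variables (F : fieldType) (n : nat).
Local Notation R := {mpoly F[n]}.

Lemma homog_prod_gen (I : Type) (s : seq I) (P : pred I) (Fp : I -> R) (dg : I -> nat) :
  (forall i, P i -> Fp i \is (dg i).-homog) ->
  \prod_(i <- s | P i) Fp i \is (\sum_(i <- s | P i) dg i)%N.-homog.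
Proof.
move=> h; apply: (big_rec2 (fun d (p : R) => p \is d.-homog)); first exact: dhomog1.
by move=> i d p Pi hp; apply: dhomogM => //; apply: h.
Qed.

Lemma det_homog j (M : 'M[R]_j) (dg : 'I_j -> nat) :
  (forall a b, M a b \is (dg a).-homog) -> \det M \is (\sum_a dg a)%N.-homog.
Proof.
move=> h; rewrite /determinant; apply: rpred_sum => t _.
rewrite rpredMsign; apply: homog_prod_gen => a _; exact: h.
Qed.

Lemma homog_div (p h : R) da de : h \is de.-homog -> h != 0 -> p * h \is da.-homog ->
  p \is (subn da de).-homog /\ (p != 0 -> (de <= da)%N).
Proof.
move=> hh nh hph.
pose K := mmeasure mdeg p.
have pE : p = \sum_(t < K) pihomog mdeg t p by apply: pihomog_partitionE.
have key : forall t : 'I_K, (t + de)%N != da -> pihomog mdeg t p = 0.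
  move=> t nt.
  have : pihomog mdeg (t + de) (p * h) = pihomog mdeg t p * h.
    rewrite {1}pE mulr_suml linear_sum /= (bigD1 t) //= big1 ?addr0.
      by rewrite pihomog_dE //; apply: dhomogM => //; apply: pihomogP.
    move=> s nst; apply: (pihomog_ne0 (d := (s + de)%N)).
      by rewrite eqn_add2r; apply: contra nst => /eqP /val_inj ->.
    by apply: dhomogM => //; apply: pihomogP.
  rewrite (pihomog_ne0 (d := da)) // 1?eq_sym //.
  by move/eqP; rewrite eq_sym mulf_eq0 (negbTE nh) orbF => /eqP.
have pE2 : p = \sum_(t < K | (t + de)%N == da) pihomog mdeg t p.
  rewrite {1}pE (bigID (fun t : 'I_K => (t + de)%N == da)) /= [X in _ + X]big1 ?addr0 //; by move=> t /key.
split.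
  rewrite pE2; apply: rpred_sum => t /eqP <-; rewrite addnK; exact: pihomogP.
move=> np; rewrite pE2 in np; case: (pickP (fun t : 'I_K => (t + de)%N == da)) => [t /eqP <-|none].
  by rewrite leq_addl.
by move: np; rewrite big_pred0 ?eqxx.
Qed.

End MPolyFacts.
Section DimLemma.
Variables (F : fieldType) (W : lmodType F).

Lemma has_dim_basis (P : W -> Prop) (I : finType) (A : {set I}) (v : I -> W) :
  (forall i, i \in A -> P (v i)) ->
  (forall c : I -> F, \sum_(i in A) c i *: v i = 0 -> forall i, i \in A -> c i = 0) ->
  (forall w, P w -> exists c : I -> F, w = \sum_(i in A) c i *: v i) ->
  has_dim P #|A|.
Proof.
move=> hP hind hspan; split.
  exists (fun a => v (enum_val a)); split; first by move=> a; apply: hP; apply: enum_valP.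
  move=> c hc a.
  pose c' i := c (enum_rank_in (enum_valP a) i).
  have : \sum_(i in A) c' i *: v i = 0.
    rewrite big_enum_val -[RHS]hc; apply: eq_bigr => b _.
    by rewrite /c' enum_valK_in.
  move/hind => /(_ (enum_val a) (enum_valP a)).
  by rewrite /c' enum_valK_in.
move=> u Pu indep.
have : forall l, exists c : I -> F, u l = \sum_(i in A) c i *: v i.
  by move=> l; apply: hspan.
case/fin_all_exists => x hx.
pose X : 'M[F]_(#|A|.+1, #|A|) := \matrix_(l, a) x l (enum_val a).
have nz : kermx X != 0.
  rewrite kermx_eq0 /row_free; apply/negP => /eqP h.
  by have := rank_leq_col X; rewrite h ltnn.
case: (pickP (fun i => row i (kermx X) != 0)) => [i hi|none]; last first.
  apply: (negP nz); apply/eqP/row_matrixP => i; move: (none i) => /negbFE/eqP ->.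
  by rewrite row0.
pose y l := kermx X i l.
have hy : forall a : 'I_#|A|, \sum_l y l * x l (enum_val a) = 0.
  move=> a; transitivity ((kermx X *m X) i a); last by rewrite mulmx_ker mxE.
  rewrite mxE; apply: eq_bigr => l _; rewrite /y [X l a]mxE; done.
have : \sum_l y l *: u l = 0.
  under eq_bigr => l _ do rewrite hx scaler_sumr.
  rewrite exchange_big /= big1 // => j jA.
  under eq_bigr => l _ do rewrite scalerA.
  rewrite -scaler_suml.
  have := hy (enum_rank_in jA j); rewrite enum_rankK_in // => ->.
  by rewrite scale0r.
move/indep => allz; apply: (negP hi); apply/eqP/rowP => l.
by move: (allz l); rewrite /y !mxE => ->.
Qed.
End DimLemma.
Section Inv.
Variables (F : fieldType) (n : nat) (gT : finGroupType) (G : {group gT})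
  (rho : mx_representation F G n) (f : 'I_n -> {mpoly F[n]}) (d : 'I_n -> nat).
Hypothesis Hbi : basic_invariants G rho f d.
Local Notation R := {mpoly F[n]}.

Definition ftup : n.-tuple R := [tuple f i | i < n].
Definition fmon (m : 'X_{1..n}) : R := 'X_[m] \mPo ftup.
Definition wdeg (m : 'X_{1..n}) : nat := (\sum_(i < n) m i * d i)%N.

Lemma fmonE m : fmon m = \prod_(i < n) f i ^+ m i.
Proof. by rewrite /fmon comp_mpolyX; apply: eq_bigr => i _; rewrite tnth_mktuple. Qed.

Lemma fmon_homog m : fmon m \is (wdeg m).-homog.
Proof.
case: Hbi => hh _ _ _; rewrite fmonE /wdeg.
have -> : (\sum_(i < n) m i * d i = \sum_(i < n) d i * m i)%N.
  by apply: eq_bigr => i _; rewrite mulnC.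
by apply: homog_prod_gen => i _; apply: dhomogMn.
Qed.

Lemma fmon_inv m g : g \in G -> sact rho g (fmon m) = fmon m.
Proof.
case: Hbi => _ hinv _ _ gG; rewrite fmonE /sact rmorph_prod /=; apply: eq_bigr => i _.
by rewrite rmorphXn /= -/(sact rho g (f i)) hinv.
Qed.

Lemma homog0_const (p : R) : p \is 0.-homog -> p = (p@_0)%:MP.
Proof.
move=> hp; apply/mpolyP => m; rewrite mcoeffC.
case: (eqVneq m 0%MM) => [->|nm]; first by rewrite mulr1.
rewrite mulr0 (dhomog_nemf_coeff hp) //; by rewrite mdeg_eq0.
Qed.

Lemma d_pos i : (0 < d i)%N.
Proof.
case: Hbi => hh _ hind _; rewrite lt0n; apply/negP => /eqP d0.
have hc := homog0_const (etrans (congr1 (fun k => f i \is k.-homog) (esym d0)) (hh i)).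
pose P : R := 'X_i - ((f i)@_0)%:MP.
have : P \mPo [tuple f i | i < n] = 0.
  rewrite raddfB /= comp_mpolyXU comp_mpolyC -tnth_nth tnth_mktuple.
  by rewrite {1}hc subrr.
move/hind => /eqP; apply/negP.
apply/eqP => /(congr1 (mcoeff U_(i)%MM)); rewrite mcoeffB mcoeffXU mcoeffC mcoeff0 eqxx.
have -> : (U_(i)%MM == 0%MM) = false.
  by apply/negbTE; rewrite -mdeg_eq0 mdeg1.
by rewrite mulr0 subr0 => /eqP; rewrite oner_eq0.
Qed.

Lemma mdeg_le_wdeg m : (mdeg m <= wdeg m)%N.
Proof.
rewrite mdegE /wdeg; apply: leq_sum => i _; by rewrite leq_pmulr // d_pos.
Qed.

Lemma fmon_indep Nb (B : pred 'X_{1..n < Nb}) (c : 'X_{1..n < Nb} -> F) :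
  \sum_(mu | B mu) c mu *: fmon mu = 0 -> forall mu, B mu -> c mu = 0.
Proof.
case: Hbi => _ _ hind _ h mu0 Bmu0.
have : (\sum_(mu | B mu) c mu *: 'X_[val mu]) \mPo [tuple f i | i < n] = 0.
  by rewrite linear_sum -[RHS]h; apply: eq_bigr => mu _; rewrite linearZ.
move/hind/(congr1 (mcoeff (val mu0))); rewrite raddf_sum mcoeff0 (bigD1 mu0) //= big1.
  by rewrite mcoeffZ mcoeffX eqxx mulr1 addr0.
move=> mu /andP [_ nmu]; rewrite mcoeffZ mcoeffX.
suff -> : (val mu == val mu0) = false by rewrite mulr0.
by apply/negbTE; apply: contra nmu => /eqP /val_inj ->.
Qed.

Lemma inv_basis Nb m (c : R) : Defs.invariant G rho c -> c \is m.-homog -> (m < Nb)%N ->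
  exists b : 'X_{1..n < Nb} -> F,
    c = \sum_(mu : 'X_{1..n < Nb} | wdeg mu == m) b mu *: fmon mu.
Proof.
case: Hbi => _ _ _ hgen ci ch hm; case: (hgen c ci) => P cP.
exists (fun mu => P@_(val mu)).
have c1 : c = \sum_(mu <- msupp P | wdeg mu == m) P@_mu *: fmon mu.
  rewrite -(pihomog_dE ch) cP comp_mpolyEX linear_sum /= [RHS]big_mkcond /=.
  apply: eq_bigr => mu _; rewrite linearZ /=.
  case: eqP => [<-|nm]; first by rewrite pihomog_dE //; apply: fmon_homog.
  by rewrite (pihomog_ne0 (d := wdeg mu)) ?scaler0 //; [apply/eqP | apply: fmon_homog].
pose I : subFinType _ := 'X_{1..n < Nb}.
rewrite c1 (big_mksub_cond I) /=; last first.
    by move=> x _ /eqP wx; rewrite /= (leq_ltn_trans (mdeg_le_wdeg x)) // wx.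
  exact: msupp_uniq.
rewrite [RHS](bigID (fun mu : 'X_{1..n < Nb} => val mu \in msupp P)) /=.
rewrite [X in _ = _ + X]big1 ?addr0; last first.
  by move=> mu /andP [_ /memN_msupp_eq0 ->]; rewrite scale0r.
by apply: eq_bigl => mu.
Qed.

End Inv.

Section Main.
Variables (F : fieldType) (n r : nat) (gT : finGroupType) (G : {group gT})
  (rho : mx_representation F G n) (sigma : mx_representation F G r) (chi : gT -> F)
  (f : 'I_n -> {mpoly F[n]}) (d : 'I_n -> nat) (Delta : {mpoly F[n]}) (delta : nat)
  (omega : 'I_r -> {ffun 'I_r -> {mpoly F[n]}}) (e : 'I_r -> nat).
Hypothesis Hbi : basic_invariants G rho f d.
Hypothesis Hsg : semi_inv_generator G rho chi Delta delta.
Hypothesis Heb : exponent_basis G rho sigma omega e.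

Local Notation R := {mpoly F[n]}.
Local Notation W := {ffun {set 'I_r} -> {mpoly F[n]}}.

Definition lqg (g : gT) : n.-tuple R := [tuple \sum_(k < n) rho (g^-1)%g i k *: 'X_k | i < n].
Definition sg (g : gT) : {rmorphism R -> R} := comp_mpoly (lqg g).

Lemma sactE g p : sact rho g p = sg g p.
Proof. by []. Qed.

Lemma sgZ g (c : F) p : sg g (c *: p) = c *: sg g p.
Proof. exact: comp_mpolyZ. Qed.

Lemma sgC g (c : F) : sg g c%:MP = c%:MP.
Proof. exact: comp_mpolyC. Qed.

Definition Om : 'M[R]_r := \matrix_(i, k) omega i k.
Definition sR (g : gT) : 'M[R]_r := map_mx (@mpolyC n F) (sigma g).

Lemma Om_inv g : g \in G -> map_mx (sg g) Om *m (sR g)^T = Om.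
Proof.
move=> gG; case: Heb => _ hinv _ _; apply/matrixP => i k; rewrite !mxE.
move/ffunP: (hinv i g gG) => /(_ k); rewrite /smact ffunE => <-.
by apply: eq_bigr => j _; rewrite !mxE mulrC mul_mpolyC.
Qed.

Lemma Om_sg g : g \in G -> map_mx (sg g) Om = Om *m (sR (g^-1)%g)^T.
Proof.
move=> gG; rewrite -{2}(Om_inv gG) -mulmxA -trmx_mul /sR -map_mxM.
by rewrite -repr_mxM ?groupV // mulVg repr_mx1 map_mx1 trmx1 mulmx1.
Qed.

Lemma sg_mj g j (S' U : {set 'I_r}) : g \in G -> #|U| = j ->
  sg g (mj j Om S' U) =
  \sum_(T : {set 'I_r} | #|T| == j) mj j Om S' T * (minor (sigma (g^-1)%g) U T)%:MP.
Proof.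
move=> gG cU; rewrite -mj_map Om_sg // mj_mul; apply: eq_bigr => T _.
by rewrite mj_tr /sR mj_map /minor cU.
Qed.


Definition Cw (w : W) : W :=
  [ffun S' : {set 'I_r} => \sum_(T : {set 'I_r} | #|T| == #|S'|) mj #|S'| Om S' T * w T].

Lemma Cw_wact g w (S' : {set 'I_r}) : g \in G -> Cw (wact rho sigma g w) S' = sg g (Cw w S').
Proof.
move=> gG; rewrite !ffunE rmorph_sum /=.
under [RHS]eq_bigr => U /eqP cU do rewrite rmorphM /= (@sg_mj g #|S'| S' U gG cU) mulr_suml.
under eq_bigr => T /eqP cT do rewrite ffunE mulr_sumr cT.
rewrite exchange_big /=; apply: eq_bigr => U _; apply: eq_bigr => T _.
by rewrite sactE -mul_mpolyC mulrA.
Qed.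

Lemma Cw_sum (I : finType) (P : pred I) (c : I -> F) (v : I -> W) (S' : {set 'I_r}) :
  Cw (\sum_(i | P i) c i *: v i) S' = \sum_(i | P i) c i *: Cw (v i) S'.
Proof.
rewrite ffunE; under eq_bigr => T _ do rewrite sum_ffunE mulr_sumr.
rewrite exchange_big; apply: eq_bigr => i _; rewrite ffunE scaler_sumr.
by apply: eq_bigr => T _; rewrite ffunE scalerAr.
Qed.

Lemma Cw_scale (k : F) w (S' : {set 'I_r}) : Cw (k *: w) S' = k *: Cw w S'.
Proof.
rewrite !ffunE scaler_sumr; apply: eq_bigr => T _.
by rewrite ffunE scalerAr.
Qed.

Definition pmul (p : R) (w : W) : W := [ffun T => p * w T].

Lemma Cw_pmul p w (S' : {set 'I_r}) : Cw (pmul p w) S' = p * Cw w S'.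
Proof.
rewrite !ffunE mulr_sumr; apply: eq_bigr => T _.
by rewrite ffunE mulrCA.
Qed.

Lemma Cw_recover (w : W) (T : {set 'I_r}) :
  \det Om ^+ #|T| * w T =
  \sum_(S' : {set 'I_r} | #|S'| == #|T|) mj #|T| (\adj Om) T S' * Cw w S'.
Proof.
under [RHS]eq_bigr => S' /eqP cS do rewrite ffunE cS mulr_sumr.
rewrite exchange_big /=.
under [RHS]eq_bigr => U _ do (under eq_bigr => S' _ do rewrite mulrA; rewrite -mulr_suml -mj_mul).
rewrite mul_adj_mx (bigD1 T) //= big1 ?addr0.
  by rewrite -scalemx1 mjZ mj1 // eqxx mulr1.
move=> U /andP [/eqP cU nUT].
by rewrite -scalemx1 mjZ mj1 // eq_sym (negbTE nUT) mulr0 mul0r.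
Qed.

Variable Q : R.
Hypothesis HQ : Delta = Q * jac omega.

Lemma jacE : jac omega = \det Om.
Proof. by []. Qed.

Lemma Delta_neq0 : Delta != 0.
Proof. by case: Hsg. Qed.

Lemma J_neq0 : \det Om != 0.
Proof.
apply: contra Delta_neq0 => /eqP h; by rewrite HQ jacE h mulr0.
Qed.

Lemma Cw_inj w1 w2 : (forall S', Cw w1 S' = Cw w2 S') -> w1 = w2.
Proof.
move=> h; apply/ffunP => T; apply: (mulfI (expf_neq0 #|T| J_neq0)).
by rewrite !Cw_recover; apply: eq_bigr => S' _; rewrite h.
Qed.

Definition Phi (S : {set 'I_r}) : W :=
  [ffun T : {set 'I_r} => if #|T| == #|S| then Q * adjm #|S| Om T S else 0].

Lemma Cw_Phi (S S' : {set 'I_r}) : Cw (Phi S) S' = (S' == S)%:R * Delta.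
Proof.
rewrite ffunE; case: (eqVneq #|S'| #|S|) => cS.
  under eq_bigr => T /eqP cT do rewrite ffunE cT cS eqxx mulrCA.
  rewrite cS -mulr_sumr mj_adjm // HQ jacE.
  by rewrite [LHS]mulrCA.
have -> : (S' == S) = false by apply/negbTE; apply: contra cS => /eqP ->.
by rewrite mul0r big1 // => T /eqP cT; rewrite ffunE cT (negbTE cS) mulr0.
Qed.

Lemma semi_of_Cw w g : g \in G ->
  (forall S', sg g (Cw w S') = chi g *: Cw w S') -> wact rho sigma g w = chi g *: w.
Proof. by move=> gG h; apply: Cw_inj => S'; rewrite Cw_wact // h Cw_scale. Qed.

Lemma Cw_of_semi w g (S' : {set 'I_r}) : g \in G -> wact rho sigma g w = chi g *: w ->
  sg g (Cw w S') = chi g *: Cw w S'.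
Proof. by move=> gG h; rewrite -Cw_wact // h Cw_scale. Qed.


Definition E := (\sum_(i < r) e i)%N.
Definition esum (S : {set 'I_r}) := (\sum_(i in S) e i)%N.

Lemma esum_le S : (esum S <= E)%N.
Proof.
rewrite /E /esum [X in (_ <= X)%N](bigID (fun i => i \in S)) /=; exact: leq_addr.
Qed.

Lemma esum_split S : E = (esum S + \sum_(i | i \notin S) e i)%N.
Proof. by rewrite /E /esum (bigID (fun i => i \in S)). Qed.

Lemma J_homog : \det Om \is E.-homog.
Proof.
case: Heb => hh _ _ _; apply: det_homog => a b; rewrite mxE; exact: hh.
Qed.

Lemma Q_homog : Q \is (delta - E)%N.-homog /\ (E <= delta)%N.
Proof.
case: Hsg => hD nD _ _.
have [h1 h2] := homog_div J_homog J_neq0 (etrans (congr1 (fun p => p \is delta.-homog) (esym HQ)) hD).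
split=> //; apply: h2; apply: contra nD => /eqP q0; by rewrite HQ q0 mul0r.
Qed.

Lemma eTn_enum_val (S : {set 'I_r}) (a : 'I_#|S|) : eTn S a = val (enum_val a).
Proof. by rewrite /eTn /enum_val (nth_map (enum_default a)) // -cardE. Qed.

Definition natdeg (k : nat) : nat :=
  if @insub _ (fun x => x < r)%N 'I_r k is Some i then e i else 0%N.

Lemma mj_homog j (S' T : {set 'I_r}) : #|S'| = j -> mj j Om S' T \is (esum S').-homog.
Proof.
move=> cS; case: Heb => hh _ _ _.
have -> : esum S' = (\sum_(a < j) natdeg (eTn S' a))%N.
  subst j; rewrite /esum big_enum_val; apply: eq_bigr => a _.
  by rewrite eTn_enum_val /natdeg valK.
apply: det_homog => a b; rewrite mxE /natentR /natdeg.
case: (insub (eTn S' a) : option 'I_r) => [i|]; last exact: dhomog0.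
case: (insub (eTn T b) : option 'I_r) => [k|]; last exact: dhomog0.
by rewrite mxE; apply: hh.
Qed.

Lemma adjm_homog j (T S : {set 'I_r}) : #|S| = j -> adjm j Om T S \is (E - esum S)%N.-homog.
Proof.
move=> cS; case: Heb => hh _ _ _.
have -> : (E - esum S = \sum_(i < r) (if i \in S then 0 else e i))%N.
  rewrite (esum_split S) addKn big_mkcond /=; apply: eq_bigr => i _.
  by case: (i \in S).
apply: det_homog => i k; rewrite mxE.
case: pickP => [a /eqP ha|hn].
  have iS : i \in S.
    have ha' : (a < #|S|)%N by rewrite cS.
    case: (eTnP ha') => u uS eu; have -> : i = u by apply: val_inj => /=; rewrite -ha eu.
    done.
  rewrite iS mxE /natrow; case: (insub (eTn T a) : option 'I_r) => [x|]; last exact: dhomog0.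
  by rewrite mxE; apply: rpredMn; apply: dhomog1.
have -> : (i \in S) = false.
  apply/negbTE/negP => iS; case: (eTn_index iS) => ha et.
  have ha' : (index i (enum S) < j)%N by rewrite -cS.
  by move: (hn (Ordinal ha')); rewrite /= et eqxx.
rewrite mxE; exact: hh.
Qed.

Lemma Cw_zero S' : Cw 0 S' = 0.
Proof. by rewrite ffunE big1 // => T _; rewrite ffunE mulr0. Qed.

Section Piece.
Variables (deg j : nat).

Definition Nb := (deg + E).+1.
Definition Ix := ({set 'I_r} * 'X_{1..n < Nb})%type.
Definition Aset : {set Ix} :=
  [set x : Ix | (#|x.1| == j) && (wdeg d x.2 + delta == deg + esum x.1)%N].
Definition vv (x : Ix) : W := pmul (fmon f x.2) (Phi x.1).

Lemma Cw_v (x : Ix) S' : Cw (vv x) S' = fmon f x.2 * ((S' == x.1)%:R * Delta).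
Proof. by rewrite Cw_pmul Cw_Phi. Qed.

Lemma sumA_pair (V : zmodType) (H : Ix -> V) :
  \sum_(x in Aset) H x = \sum_(S : {set 'I_r}) \sum_(mu | (S, mu) \in Aset) H (S, mu).
Proof.
rewrite pair_big_dep /=; apply: eq_big => [[S mu]|[S mu] _] //.
Qed.

Lemma Cw_comb (cc : Ix -> F) S' :
  Cw (\sum_(x in Aset) cc x *: vv x) S' =
  (\sum_(mu | (S', mu) \in Aset) cc (S', mu) *: fmon f mu) * Delta.
Proof.
rewrite Cw_sum (sumA_pair (fun x => cc x *: Cw (vv x) S')) (bigD1 S') //.
rewrite [in LHS]/= [X in _ + X = _]big1; last first.
  move=> S nS; apply: big1 => mu _; rewrite Cw_v [(S, mu).1]/= eq_sym.
  by rewrite (negbTE nS) mul0r mulr0 scaler0.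
rewrite addr0 mulr_suml; apply: eq_bigr => mu _; rewrite Cw_v [(S', mu).1]/= [(S', mu).2]/= eqxx mul1r.
by rewrite scalerAl.
Qed.

Lemma vv_piece x : x \in Aset -> chi_piece G rho sigma chi deg j (vv x).
Proof.
rewrite inE => /andP [/eqP cx /eqP wx].
have [hQ hE] := Q_homog.
split.
- move=> S nS; rewrite !ffunE cx (negbTE nS) mulr0 //.
- move=> S; rewrite !ffunE; case: eqP => cS; last by rewrite mulr0; apply: dhomog0.
  have hes := esum_le x.1.
  have -> : deg = (wdeg d x.2 + ((delta - E) + (E - esum x.1)))%N.
    move: wx hE hes; move: (wdeg d x.2) (esum x.1) E delta => a b c dd; clear; lia.
  apply: dhomogM; first exact: (fmon_homog Hbi).
  apply: dhomogM => //; exact: adjm_homog.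
- move=> g gG; apply: semi_of_Cw => // S'.
  rewrite Cw_v !rmorphM /= -sactE (fmon_inv Hbi) // rmorph_nat.
  case: Hsg => _ _ hsemi _; rewrite -sactE hsemi //.
  by rewrite !scalerAr.
Qed.

Lemma vv_indep (cc : Ix -> F) :
  \sum_(x in Aset) cc x *: vv x = 0 -> forall x, x \in Aset -> cc x = 0.
Proof.
move=> h [S0 mu0] hx.
have := congr1 (fun w => Cw w S0) h; rewrite /= Cw_comb Cw_zero.
move/eqP; rewrite mulf_eq0 (negbTE Delta_neq0) orbF => /eqP hs.
exact: (fmon_indep Hbi (B := fun mu => (S0, mu) \in Aset) hs).
Qed.

Lemma vv_span w : chi_piece G rho sigma chi deg j w ->
  exists cc : Ix -> F, w = \sum_(x in Aset) cc x *: vv x.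
Proof.
case=> hsupp hdeg hsemi.
case: Hsg => hD nD _ hgen.
have : forall S' : {set 'I_r}, exists c : R, Defs.invariant G rho c /\ Cw w S' = c * Delta.
  move=> S'; apply: hgen => g gG; rewrite sactE; exact: (Cw_of_semi S' gG (hsemi g gG)).
case/fin_all_exists => c hc.
have : forall S' : {set 'I_r}, exists b : 'X_{1..n < Nb} -> F, #|S'| == j ->
    c S' = \sum_(mu : 'X_{1..n < Nb} | (wdeg d mu + delta == deg + esum S')%N) b mu *: fmon f mu.
  move=> S'; case: (eqVneq #|S'| j) => cS; last by exists (fun=> 0).
  case: (hc S') => ci cw.
  have hCw : Cw w S' \is (esum S' + deg)%N.-homog.
    rewrite ffunE; apply: rpred_sum => T /eqP cT.
    by apply: dhomogM; [apply: mj_homog | apply: hdeg].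
  rewrite cw in hCw; have [hc1 hc2] := homog_div hD nD hCw.
  case: (eqVneq (c S') 0) => c0.
    by exists (fun=> 0) => _; rewrite c0 big1 // => mu _; rewrite scale0r.
  have hle := hc2 c0; have hes := esum_le S'.
  have hm : (esum S' + deg - delta < Nb)%N.
    rewrite /Nb; move: hle hes; move: (esum S') E delta => a1 b1 c1; clear; lia.
  case: (inv_basis Hbi ci hc1 hm) => b hb; exists b => _; rewrite hb.
  apply: eq_bigl => mu; apply/eqP/eqP; move: hle; move: (wdeg d mu) (esum S') delta => a1 b1 c1; clear; lia.
case/fin_all_exists => b hb.
exists (fun x => b x.1 x.2); apply: Cw_inj => S'.
rewrite Cw_comb; case: (hc S') => _ ->.
case: (eqVneq #|S'| j) => cS.
  have cSb : #|S'| == j by apply/eqP.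
  rewrite (hb S' cSb); congr (_ * _); apply: eq_bigl => mu.
  by rewrite inE /= cS eqxx.
rewrite big_pred0 ?mul0r; last by move=> mu; rewrite inE /= (negbTE cS).
rewrite -(proj2 (hc S')) ffunE big1 // => T /eqP cT.
by rewrite hsupp ?mulr0 // cT.
Qed.

Lemma piece_dim : has_dim (chi_piece G rho sigma chi deg j) #|Aset|.
Proof.
apply: has_dim_basis; [exact: vv_piece | exact: vv_indep | exact: vv_span].
Qed.

Lemma card_wdeg m : (m < Nb)%N ->
  #|[set mu : 'X_{1..n < Nb} | wdeg d mu == m]| =
  #|[set k : {ffun 'I_n -> 'I_m.+1} | (\sum_(i < n) k i * d i == m)%N]|.
Proof.
move=> hm; pose g (mu : 'X_{1..n < Nb}) : {ffun 'I_n -> 'I_m.+1} := [ffun i => inord (val mu i)].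
have le_m : forall mu : 'X_{1..n < Nb}, wdeg d mu == m -> forall i, (val mu i <= m)%N.
  move=> mu /eqP <- i; apply: leq_trans (mdeg_le_wdeg Hbi _).
  by rewrite mdegE (bigD1 i) //= leq_addr.
have gK : forall mu : 'X_{1..n < Nb}, wdeg d mu == m -> forall i, (g mu i : nat) = val mu i.
  by move=> mu h i; rewrite ffunE inordK // ltnS le_m.
rewrite -(card_in_imset (f := g)); last first.
  move=> mu1 mu2; rewrite !inE => h1 h2 /ffunP eq; apply/val_inj/mnmP => i.
  by rewrite -(gK _ h1) -(gK _ h2) eq.
apply: eq_card => k; rewrite [in RHS]inE; apply/imsetP/idP.
  case=> mu; rewrite inE => hmu ->.
  rewrite (eq_bigr (fun i => (val mu i * d i)%N)); first exact: hmu.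
  by move=> i _; rewrite gK.
move=> hk.
have hw : wdeg d [multinom (k i : nat) | i < n] = m.
  rewrite /wdeg (eq_bigr (fun i => (k i * d i)%N)) ?(eqP hk) // => i _.
  by rewrite mnmE.
have hmdeg : (mdeg [multinom (k i : nat) | i < n] < Nb)%N.
  by apply: leq_ltn_trans (mdeg_le_wdeg Hbi _) _; rewrite hw.
exists (BMultinom hmdeg); first by rewrite inE /= hw.
apply/ffunP => i; rewrite ffunE /=; apply: val_inj; rewrite /= mnmE inordK //.
Qed.

Lemma card_Aset : #|Aset| = rhs_coef d e delta (Posz deg) j.
Proof.
rewrite /rhs_coef -sum1_card.
transitivity (\sum_(S : {set 'I_r}) \sum_(mu | (S, mu) \in Aset) 1)%N.
  by rewrite pair_big_dep; apply: eq_big => [[S mu]|[S mu] _].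
rewrite (bigID (fun S : {set 'I_r} => #|S| == j)) /= [X in (_ + X)%N]big1 ?addn0; last first.
  by move=> S nS; rewrite big_pred0 // => mu; rewrite inE /= (negbTE nS).
apply: eq_bigr => S cS.
have -> : (\sum_(mu | (S, mu) \in Aset) 1 = #|[set mu | (S, mu) \in Aset]|)%N.
  by rewrite -sum1_card; apply: eq_bigl => mu; rewrite inE.
have [_ hE] := Q_homog; have hes := esum_le S.
case: (leqP delta (deg + esum S)) => hle.
  have -> : (Posz deg - delta%:Z + (esum S)%:Z = Posz (deg + esum S - delta))%R.
    move: hle; move: (esum S) delta deg => a b c; clear; lia.
  rewrite /nsol -card_wdeg; last by rewrite /Nb; move: hle hes; move: (esum S) E delta deg => a b c dd; clear; lia.
  apply: eq_card => mu; rewrite !inE /= cS /=; apply/eqP/eqP; move: hle; move: (wdeg d mu) (esum S) delta deg => a b c dd; clear; lia.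
have : (Posz deg - delta%:Z + (esum S)%:Z < 0)%R.
  move: hle; move: (esum S) delta deg => a b c; clear; lia.
move: (Posz deg - delta%:Z + (esum S)%:Z)%R => z.
case: z => [k|k] hk.
  exfalso; move: hk; clear; lia.
apply: eq_card0 => mu; rewrite !inE /= cS /=; apply/negbTE/eqP; move: hle; move: (wdeg d mu) (esum S) delta deg => a b c dd; clear; lia.
Qed.

End Piece.

Lemma rhs_neg (a : int) j : (a < 0)%R -> rhs_coef d e delta a j = 0%N.
Proof.
move=> ha; rewrite /rhs_coef big1 // => S _.
have [_ hE] := Q_homog; have hes := esum_le S.
have : (a - delta%:Z + (esum S)%:Z < 0)%R.
  move: ha hE hes; move: (esum S) E delta a => x y z t; clear; lia.
move: (a - delta%:Z + (esum S)%:Z)%R => z.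
by case: z => [k|k] hk //; exfalso; move: hk; clear; lia.
Qed.

End Main.

Theorem corollary4p11
  (F : fieldType) (n r : nat) (gT : finGroupType) (G : {group gT})
  (rho : mx_representation F G n) (sigma : mx_representation F G r)
  (chi : gT -> F)
  (f : 'I_n -> {mpoly F[n]}) (d : 'I_n -> nat)
  (Delta : {mpoly F[n]}) (delta : nat)
  (omega : 'I_r -> {ffun 'I_r -> {mpoly F[n]}}) (e : 'I_r -> nat) :
  [pchar F] =i pred0 ->
  mx_faithful rho ->
  generated_by_pseudo_reflections G rho ->
  linear_char G chi ->
  basic_invariants G rho f d ->
  semi_inv_generator G rho chi Delta delta ->
  exponent_basis G rho sigma omega e ->
  (exists Q : {mpoly F[n]}, Delta = Q * jac omega) ->
  (forall (deg : nat) (j : nat),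
      has_dim (chi_piece G rho sigma chi deg j) (rhs_coef d e delta (Posz deg) j)) /\
  (forall (a : int) (j : nat), a < 0 -> rhs_coef d e delta a j = 0%N).
Proof.
move=> _ _ _ _ Hbi Hsg Heb [Q HQ]; split.
  move=> deg j; rewrite -(card_Aset Hbi Hsg Heb HQ deg j).
  exact: (piece_dim Hbi Hsg Heb HQ).
move=> a j ha; exact: (rhs_neg d Hsg Heb HQ j ha).
Qed.
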